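(* Let $G=(U,E)$ be a graph and $\mathcal S\subset 2^U$ a category system such that the greedy category-based routing strategy ROUTING correctly routes messages between all pairs of vertices of $G$. Then $\operatorname{memdim}(\mathcal S)\ge \operatorname{diam}(G)$.
   Context: For $u\in U$ let $\mathrm{cat}(u)=\{C\in\mathcal S: u\in C\}$; the membership dimension is $\operatorname{memdim}(\mathcal S)=\max_{u\in U}|\mathrm{cat}(u)|$. For $s,t\in U$ define $d(s,t)=|\mathrm{cat}(t)\setminus \mathrm{cat}(s)|$. $N(u)$ denotes the set of neighbors of $u$ in $G$, and $\operatorname{diam}(G)$ is the maximum over pairs of vertices of their shortest-path distance in $G$. The strategy ROUTING is: a node $u$ holding a message for destination $w\neq u$ forwards it to a neighbor $v\in N(u)$ with $d(v,w)<d(u,w)$. ROUTING correctly routes messages between all pairs of vertices if for every ordered pair of distinct vertices $u,w$ there is a neighbor $v\in N(u)$ with $d(v,w)<d(u,w)$ (so every message is delivered along a path on which $d(\cdot,w)$ strictly decreases). *)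

(* Defs.v *)
From mathcomp Require Import all_boot.
Set Implicit Arguments. Unset Strict Implicit. Unset Printing Implicit Defensive.

Section Defs.
Variable U : finType.

Definition cat (S : {set {set U}}) (u : U) : {set {set U}} :=
  [set C in S | u \in C].

Definition memdim (S : {set {set U}}) : nat := \max_(u : U) #|cat S u|.

Definition cdist (S : {set {set U}}) (s t : U) : nat := #|cat S t :\: cat S s|.

Definition nbhd (e : rel U) (u : U) : {set U} := [set v | e u v].

Fixpoint reach (e : rel U) (u : U) (n : nat) : {set U} :=
  match n with
  | 0 => [set u]
  | n'.+1 => reach e u n' :|: [set y | [exists x in reach e u n', e x y]]
  end.

(* shortest-path distance: least n with w reachable within n steps;
   if w is unreachable we return #|U| (larger than any finite distance,
   which is at most #|U| - 1), standing for "infinity". *)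
Definition gdist (e : rel U) (u w : U) : nat :=
  find (fun n => w \in reach e u n) (iota 0 #|U|).

Definition diam (e : rel U) : nat := \max_(u : U) \max_(w : U) gdist e u w.

Definition routing_correct (e : rel U) (S : {set {set U}}) : Prop :=
  forall u w : U, u != w ->
    exists2 v, v \in nbhd e u & cdist S v w < cdist S u w.

End Defs.

(* Main.v *)
Require Import Defs.
From mathcomp Require Import all_boot.

Lemma reach_mono (U : finType) (e : rel U) u k x :
  x \in reach e u k -> x \in reach e u k.+1.
Proof. by move=> H; rewrite /= inE H. Qed.

Lemma reach_cons (U : finType) (e : rel U) u v k x :
  e u v -> x \in reach e v k -> x \in reach e u k.+1.
Proof.
move=> Euv; elim: k x => [|k IH] x.
  rewrite /= inE => /eqP ->; rewrite /= !inE; apply/orP; right.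
  by apply/existsP; exists u; rewrite inE eqxx.
rewrite [reach e v _]/= inE => /orP [H|].
  by apply: reach_mono; apply: IH.
rewrite inE => /existsP [y /andP [Hy Eyx]].
rewrite [reach e u k.+2]/= inE; apply/orP; right; rewrite inE; apply/existsP; exists y.
by rewrite IH.
Qed.

Lemma route_reach (U : finType) (e : rel U) (S : {set {set U}}) w :
  routing_correct e S ->
  forall k u, cdist S u w <= k -> w \in reach e u k.
Proof.
move=> RC; elim=> [|k IH] u.
  rewrite leqn0 => /eqP H0; case: (eqVneq u w) => [->|Huw].
    by rewrite /= inE.
  by case: (RC u w Huw) => v _; rewrite H0.
move=> Hk; case: (eqVneq u w) => [->|Huw].
  elim: k {IH Hk} => [|k IHk]; first by apply: reach_mono; rewrite /= inE.
  by apply: reach_mono.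
case: (RC u w Huw) => v; rewrite inE => Euv Hv.
apply: (@reach_cons _ _ _ _ _ _ Euv); apply: IH.
by rewrite -ltnS; apply: leq_trans Hv Hk.
Qed.

Theorem lemma3 (U : finType) (e : rel U) (S : {set {set U}}) :
  symmetric e -> irreflexive e ->
  routing_correct e S ->
  diam e <= memdim S.
Proof.
move=> _ _ RC.
apply/bigmax_leqP => u _; apply/bigmax_leqP => w _.
have H1 : cdist S u w <= memdim S.
  apply: leq_trans (leq_bigmax w).
  by rewrite /cdist; apply: subset_leq_card; apply: subsetDl.
apply: leq_trans H1.
set k := cdist S u w.
have Hr := @route_reach _ _ _ _ RC _ _ (leqnn k).
rewrite /gdist; case: (ltnP k #|U|) => Hk.
  rewrite leqNgt; apply/negP => Hf.
  have := before_find 0 Hf.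
  by rewrite nth_iota // add0n Hr.
apply: leq_trans Hk.
by apply: leq_trans (find_size _ _) _; rewrite size_iota.
Qed.
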